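(* Let $b>0$ and let $\psi(x;a,\sigma)$ be as in the context, with $\psi^{(k)}$ its $k$-th derivative in $x$. For every $k\in\mathbb{N}\cup\{0\}$ and $x\in\mathbb{R}$, $$\frac{\partial}{\partial a}\Big(\frac{\psi^{(k)}(x;a,\sigma)}{\psi^{(k+1)}(x;a,\sigma)}\Big)=\frac{\psi^{(k)}(x;a,\sigma)\psi^{(k+2)}(x;a,\sigma)-\psi^{(k+1)}(x;a,\sigma)^2}{b\,\psi^{(k+1)}(x;a,\sigma)^2}>0.$$
   Context: Constants $b>0$, $\rho>0$; parameters $a\in\mathbb{R}$, $\sigma>0$. For $\beta<0$, $D_\beta(x)=\frac{e^{-x^2/4}}{\Gamma(-\beta)}\int_0^\infty t^{-\beta-1}e^{-t^2/2-xt}dt$, and $\psi(x;a,\sigma)=e^{\frac{(bx-a)^2}{2\sigma^2 b}}D_{-\rho/b}\big(-\frac{bx-a}{\sigma b}\sqrt{2b}\big)$, the positive strictly increasing fundamental solution of $\frac12\sigma^2u''+(a-bx)u'-\rho u=0$. *)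

(* Defs.v *)
From Stdlib Require Import Reals.
From Coquelicot Require Import Coquelicot.
Open Scope R_scope.

Definition Gamma_fn (s : R) : R :=
  RInt_gen (fun t => Rpower t (s - 1) * exp (- t))
           (at_right 0) (Rbar_locally p_infty).

(* Parabolic cylinder function for beta < 0:
   D_beta(y) = e^{-y^2/4}/Gamma(-beta) * int_0^oo t^{-beta-1} e^{-t^2/2 - y t} dt *)
Definition D_par (beta y : R) : R :=
  exp (- y ^ 2 / 4) / Gamma_fn (- beta) *
  RInt_gen (fun t => Rpower t (- beta - 1) * exp (- t ^ 2 / 2 - y * t))
           (at_right 0) (Rbar_locally p_infty).

Definition psi (b rho a sigma x : R) : R :=
  exp ((b * x - a) ^ 2 / (2 * sigma ^ 2 * b)) *
  D_par (- rho / b) (- ((b * x - a) / (sigma * b)) * sqrt (2 * b)).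

(* Main.v *)
Require Import Defs.
From Stdlib Require Import Reals Lra.
From Coquelicot Require Import Coquelicot.
Open Scope R_scope.

Lemma ballR (x e y : R) : ball x e y <-> Rabs (y - x) < e.
Proof. reflexivity. Qed.

Lemma at_right0_ev (a0 : R) : 0 < a0 -> at_right 0 (fun a => 0 < a < a0).
Proof.
  intros H. unfold at_right, within, locally.
  exists (mkposreal a0 H). intros y Hy Hp. apply ballR in Hy. simpl in Hy.
  change (Rabs (y - 0) < a0) in Hy. rewrite Rminus_0_r in Hy. apply Rabs_lt_between in Hy. lra.
Qed.

Lemma exR (f : R -> R) a b : (forall t, 0 < t -> continuous f t) -> 0 < a -> 0 < b -> ex_RInt f a b.
Proof.
  intros Hc Ha Hb. apply (@ex_RInt_continuous R_CompleteNormedModule). intros z [Hz _]. apply Hc.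
  apply Rlt_le_trans with (2 := Hz). apply Rmin_case; lra.
Qed.

Notation F0 := (at_right 0).
Notation Finf := (Rbar_locally p_infty).

Lemma ex_gen_pos (f : R -> R) (M : R) :
  (forall t, 0 < t -> 0 <= f t) ->
  (forall t, 0 < t -> continuous f t) ->
  (forall a b, 0 < a -> a <= b -> RInt f a b <= M) ->
  ex_RInt_gen f F0 Finf.
Proof.
  intros Hpos Hc HM.
  set (E := fun v => exists a b, 0 < a /\ a <= b /\ v = RInt f a b).
  assert (Hb : bound E). { exists M. intros v (a & b & Ha & Hab & ->). auto. }
  assert (He : exists v, E v). { exists (RInt f 1 1). exists 1, 1. repeat split; lra. }
  destruct (completeness E Hb He) as [L [HL1 HL2]].
  exists L. intros P [eps HP].
  assert (Hex : exists a0 b0, 0 < a0 /\ a0 <= b0 /\ L - eps < RInt f a0 b0).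
  { apply Classical_Prop.NNPP. intros Hn.
    assert (L <= L - eps). { apply HL2. intros v (a & b & Ha & Hab & ->).
      apply Rnot_lt_le. intros Hlt. apply Hn. exists a, b. auto. }
    destruct eps; simpl in *; lra. }
  destruct Hex as (a0 & b0 & Ha0 & Hab0 & Hv).
  apply Filter_prod with (Q := fun a => 0 < a < a0) (R := fun b => b0 < b).
  - apply at_right0_ev; auto.
  - exists b0. auto.
  - intros a b [Ha Haa] Hbb. simpl. exists (RInt f a b). split.
    + apply (@RInt_correct R_CompleteNormedModule). apply exR; auto; lra.
    + apply HP. apply ballR.
      assert (H1 : RInt f a b <= L). { apply HL1. exists a, b. repeat split; lra. }
      assert (H2 : RInt f a0 b0 <= RInt f a b).
      { rewrite <- (RInt_Chasles f a a0 b) by (apply exR; auto; lra).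
        rewrite <- (RInt_Chasles f a0 b0 b) by (apply exR; auto; lra).
        assert (0 <= RInt f a a0) by (apply RInt_ge_0; [lra | apply exR; auto; lra | intros; apply Hpos; lra]).
        assert (0 <= RInt f b0 b) by (apply RInt_ge_0; [lra | apply exR; auto; lra | intros; apply Hpos; lra]).
        unfold plus; simpl. lra. }
      apply Rabs_lt_between. lra.
Qed.

Lemma RInt_scalR g a b K : ex_RInt g a b -> RInt (fun t => K * g t) a b = K * RInt g a b.
Proof. intros H. exact (RInt_scal g a b K H). Qed.

Lemma cont_of_der (f : R -> R) x : ex_derive f x -> continuous f x.
Proof. apply (@ex_derive_continuous R_AbsRing R_NormedModule). Qed.

Definition pw (m t : R) := exp (m * ln t).

Lemma pw_cont m t : 0 < t -> continuous (pw m) t.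
Proof. intros H. apply cont_of_der. unfold pw. auto_derive. lra. Qed.

Lemma pw_pos m t : 0 < pw m t.
Proof. apply exp_pos. Qed.

Lemma RInt_pw_bound m a : -1 < m -> 0 < a <= 1 -> RInt (pw m) a 1 <= 1 / (m + 1).
Proof.
  intros Hm Ha.
  assert (H : is_RInt (pw m) a 1 (minus (pw (m+1) 1 / (m+1)) (pw (m+1) a / (m+1)))).
  { apply (@is_RInt_derive R_CompleteNormedModule (fun t => pw (m+1) t / (m+1))).
    - intros x Hx. assert (0 < x).
      { apply Rlt_le_trans with (2 := proj1 Hx). apply Rmin_case; lra. }
      unfold pw. auto_derive. lra.
      replace ((m+1) * ln x) with (m * ln x + ln x) by ring. rewrite exp_plus, exp_ln by lra.
      field. split; lra.
    - intros x Hx. apply pw_cont. apply Rlt_le_trans with (2 := proj1 Hx). apply Rmin_case; lra. }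
  apply (@is_RInt_unique R_CompleteNormedModule) in H. rewrite H.
  unfold minus, plus, opp; simpl. unfold pw at 1. rewrite ln_1, Rmult_0_r, exp_0.
  assert (0 < pw (m+1) a / (m+1)). { apply Rdiv_lt_0_compat. apply pw_pos. lra. }
  lra.
Qed.

Lemma RInt_exp_bound b : 1 <= b -> RInt (fun t => exp (- t / 2)) 1 b <= 2.
Proof.
  intros Hb.
  assert (H : is_RInt (fun t => exp (- t / 2)) 1 b (minus (-2 * exp (- b / 2)) (-2 * exp (- 1 / 2)))).
  { apply (@is_RInt_derive R_CompleteNormedModule (fun t => -2 * exp (- t / 2))).
    - intros x Hx. auto_derive. auto. replace (-2 * (- (1) * / 2 * exp (- x * / 2))) with (exp (- x * / 2)) by field. reflexivity.
    - intros x Hx. apply cont_of_der. auto_derive. auto. }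
  apply (@is_RInt_unique R_CompleteNormedModule) in H. rewrite H.
  unfold minus, plus, opp; simpl.
  assert (0 < exp (- b / 2)) by apply exp_pos.
  assert (exp (-1/2) <= 1). { rewrite <- exp_0. apply exp_le_3 || (apply Rlt_le, exp_increasing; lra). }
  lra.
Qed.

Lemma ex_gen_dom (f : R -> R) (m K : R) : -1 < m ->
  (forall t, 0 < t -> continuous f t) ->
  (forall t, 0 < t -> 0 <= f t) ->
  (forall t, 0 < t -> t <= 1 -> f t <= K * pw m t) ->
  (forall t, 1 <= t -> f t <= K * exp (- t / 2)) ->
  ex_RInt_gen f F0 Finf.
Proof.
  intros Hm Hc Hp H1 H2.
  assert (HK : 0 <= K).
  { specialize (H1 1 Rlt_0_1 (Rle_refl 1)). specialize (Hp 1 Rlt_0_1).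
    pose proof (pw_pos m 1). destruct (Rle_dec 0 K) as [|Hn]; auto. exfalso. nra. }
  apply (ex_gen_pos f (K * (1 / (m+1)) + K * 2)); auto.
  intros a b Ha Hab.
  set (a' := Rmin a 1). set (b' := Rmax b 1).
  assert (Ha' : 0 < a' <= 1). { unfold a'. split. apply Rmin_case; lra. apply Rmin_r. }
  assert (Hb' : 1 <= b'). { apply Rmax_r. }
  assert (Haa : a' <= a) by apply Rmin_l. assert (Hbb : b <= b') by apply Rmax_l.
  assert (E : RInt f a' b' = RInt f a' a + RInt f a b + RInt f b b').
  { rewrite <- (RInt_Chasles f a' a b') by (apply exR; auto; lra).
    rewrite <- (RInt_Chasles f a b b') by (apply exR; auto; lra). unfold plus; simpl; ring. }
  assert (0 <= RInt f a' a) by (apply RInt_ge_0; [lra | apply exR; auto; lra | intros; apply Hp; lra]).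
  assert (0 <= RInt f b b') by (apply RInt_ge_0; [lra | apply exR; auto; lra | intros; apply Hp; lra]).
  assert (E2 : RInt f a' b' = RInt f a' 1 + RInt f 1 b').
  { rewrite <- (RInt_Chasles f a' 1 b') by (apply exR; auto; lra). reflexivity. }
  assert (B1 : RInt f a' 1 <= K * (1 / (m+1))).
  { apply Rle_trans with (RInt (fun t => K * pw m t) a' 1).
    apply RInt_le; try lra. apply exR; auto; lra.
    apply exR; try lra. intros t Ht. apply (continuous_scal_r K (pw m)). apply pw_cont; auto.
    intros; apply H1; lra.
    rewrite RInt_scalR. apply Rmult_le_compat_l; auto. apply RInt_pw_bound; auto.
    apply exR; try lra. intros; apply pw_cont; auto. }
  assert (B2 : RInt f 1 b' <= K * 2).
  { apply Rle_trans with (RInt (fun t => K * exp (- t / 2)) 1 b').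
    apply RInt_le; try lra. apply exR; auto; lra.
    apply exR; try lra. intros t Ht. apply cont_of_der. auto_derive. auto.
    intros; apply H2; lra.
    rewrite RInt_scalR. apply Rmult_le_compat_l; auto. apply RInt_exp_bound; auto.
    apply exR; try lra. intros. apply cont_of_der. auto_derive. auto. }
  lra.
Qed.

Lemma exp_mono x y : x <= y -> exp x <= exp y.
Proof. intros [H|H]. apply Rlt_le, exp_increasing; auto. subst; lra. Qed.

Lemma ln_le_lin t : 0 < t -> ln t <= t - 1.
Proof. intros H. pose proof (exp_ineq1_le (ln t)). rewrite exp_ln in H0 by auto. lra. Qed.

Lemma ln_ge0 t : 1 <= t -> 0 <= ln t.
Proof. intros H. rewrite <- ln_1. apply ln_le; lra. Qed.

Definition w (m s t : R) := pw m t * exp (- t ^ 2 / 2 + s * t).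
Definition gi (m t : R) := pw m t * exp (- t).

Lemma w_cont m s t : 0 < t -> continuous (w m s) t.
Proof. intros H. apply cont_of_der. unfold w, pw. auto_derive. lra. Qed.
Lemma gi_cont m t : 0 < t -> continuous (gi m) t.
Proof. intros H. apply cont_of_der. unfold gi, pw. auto_derive. lra. Qed.

Lemma w_pos m s t : 0 < w m s t.
Proof. unfold w. apply Rmult_lt_0_compat; [apply pw_pos | apply exp_pos]. Qed.
Lemma gi_pos m t : 0 < gi m t.
Proof. unfold gi. apply Rmult_lt_0_compat; [apply pw_pos | apply exp_pos]. Qed.

Lemma w_ex m s : -1 < m -> ex_RInt_gen (w m s) F0 Finf.
Proof.
  intros Hm.
  set (A := Rabs m + Rabs s + 1).
  apply (ex_gen_dom (w m s) m (Rmax (exp (Rabs s)) (exp (A ^ 2 / 2)))); auto.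
  - apply w_cont.
  - intros; apply Rlt_le, w_pos.
  - intros t Ht Ht1. unfold w. rewrite Rmult_comm. apply Rmult_le_compat_r.
    apply Rlt_le, pw_pos. apply Rle_trans with (exp (Rabs s)); [|apply Rmax_l].
    apply exp_mono. pose proof (Rle_abs s). pose proof (Rabs_pos s). nra.
  - intros t Ht. apply Rle_trans with (exp (A ^ 2 / 2) * exp (- t / 2)).
    2:{ apply Rmult_le_compat_r. apply Rlt_le, exp_pos. apply Rmax_r. }
    unfold w, pw. rewrite <- !exp_plus. apply exp_mono.
    pose proof (ln_le_lin t ltac:(lra)). pose proof (ln_ge0 t Ht).
    assert (m * ln t <= Rabs m * t).
    { apply Rle_trans with (Rabs m * ln t). apply Rmult_le_compat_r; auto; apply Rle_abs.
      apply Rmult_le_compat_l. apply Rabs_pos. lra. }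
    assert (s * t <= Rabs s * t) by (apply Rmult_le_compat_r; [lra | apply Rle_abs]).
    assert (0 <= Rabs m) by apply Rabs_pos. assert (0 <= Rabs s) by apply Rabs_pos.
    pose proof (pow2_ge_0 (t - (Rabs m + Rabs s + 1/2))).
    unfold A. nra.
Qed.

Lemma gi_ex m : -1 < m -> ex_RInt_gen (gi m) F0 Finf.
Proof.
  intros Hm.
  set (p := 2 * Rabs m + 2).
  assert (Hp : 0 < p) by (unfold p; pose proof (Rabs_pos m); lra).
  set (C := Rabs m * Rabs (ln p)).
  apply (ex_gen_dom (gi m) m (Rmax 1 (exp C))); auto.
  - apply gi_cont.
  - intros; apply Rlt_le, gi_pos.
  - intros t Ht Ht1. unfold gi. rewrite Rmult_comm. apply Rmult_le_compat_r.
    apply Rlt_le, pw_pos. apply Rle_trans with 1; [|apply Rmax_l].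
    rewrite <- exp_0. apply exp_mono. lra.
  - intros t Ht. apply Rle_trans with (exp C * exp (- t / 2)).
    2:{ apply Rmult_le_compat_r. apply Rlt_le, exp_pos. apply Rmax_r. }
    unfold gi, pw. rewrite <- !exp_plus. apply exp_mono.
    pose proof (ln_le_lin (t / p) ltac:(apply Rdiv_lt_0_compat; lra)).
    rewrite ln_div in H by lra.
    pose proof (ln_ge0 t Ht).
    assert (m * ln t <= Rabs m * ln t) by (apply Rmult_le_compat_r; auto; apply Rle_abs).
    assert (0 <= Rabs m) by apply Rabs_pos.
    assert (Rabs m * ln t <= Rabs m * (t / p - 1 + ln p)) by (apply Rmult_le_compat_l; lra).
    assert (Rabs m * (t / p) <= t / 2).
    { assert (Hq : Rabs m / p <= 1 / 2).
      { apply Rmult_le_reg_r with p; auto. unfold Rdiv. rewrite Rmult_assoc, Rinv_l by lra. unfold p; lra. }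
      replace (Rabs m * (t / p)) with (t * (Rabs m / p)) by (field; lra).
      replace (t / 2) with (t * (1/2)) by field. apply Rmult_le_compat_l; lra. }
    assert (Rabs m * ln p <= C) by (unfold C; apply Rmult_le_compat_l; auto; apply Rle_abs).
    nra.
Qed.

Lemma exp_taylor1 y : Rabs (exp y - 1) <= Rabs y * exp (Rabs y).
Proof.
  destruct (MVT_cor4 exp exp 0 (Rabs y)) with (b := y) as [c [Hc1 Hc2]].
  - intros c _. apply is_derive_Reals, derivable_pt_lim_exp.
  - rewrite Rminus_0_r; lra.
  - rewrite exp_0 in Hc1. rewrite !Rminus_0_r in Hc1, Hc2. rewrite Hc1. rewrite Rabs_mult.
    rewrite (Rabs_right (exp c)) by (apply Rle_ge, Rlt_le, exp_pos).
    rewrite Rmult_comm. apply Rmult_le_compat_l. apply Rabs_pos.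
    apply exp_mono. pose proof (Rle_abs c). assert (Rabs c <= Rabs y) by (replace y with (y - 0) by lra; exact Hc2). lra.
Qed.

Lemma exp_taylor2 x : Rabs (exp x - 1 - x) <= x ^ 2 * exp (Rabs x).
Proof.
  destruct (MVT_cor4 (fun y => exp y - y) (fun y => exp y - 1) 0 (Rabs x)) with (b := x) as [c [Hc1 Hc2]].
  - intros c _. auto_derive. auto. ring.
  - rewrite Rminus_0_r; lra.
  - assert (E : forall z, z - 0 = z) by (intros; lra). rewrite !E, exp_0 in Hc1. rewrite !E in Hc2.
    replace (exp x - 1 - x) with ((exp c - 1) * x) by lra.
    rewrite Rabs_mult. pose proof (exp_taylor1 c).
    apply Rle_trans with (Rabs c * exp (Rabs c) * Rabs x).
    { apply Rmult_le_compat_r. apply Rabs_pos. exact H. }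
    assert (Hx2 : x ^ 2 = Rabs x * Rabs x).
    { rewrite <- Rabs_mult. rewrite Rabs_right. ring. pose proof (pow2_ge_0 x). apply Rle_ge. nra. }
    rewrite Hx2.
    assert (exp (Rabs c) <= exp (Rabs x)) by (apply exp_mono; lra).
    pose proof (Rabs_pos c). pose proof (Rabs_pos x). pose proof (exp_pos (Rabs c)).
    assert (Rabs c * exp (Rabs c) <= Rabs x * exp (Rabs x)) by (apply Rmult_le_compat; lra).
    replace (Rabs x * Rabs x * exp (Rabs x)) with ((Rabs x * exp (Rabs x)) * Rabs x) by ring.
    apply Rmult_le_compat_r; lra.
Qed.

Definition J (m s : R) := RInt_gen (w m s) F0 Finf.

Lemma J_correct m s : -1 < m -> is_RInt_gen (w m s) F0 Finf (J m s).
Proof. intros Hm. apply (@RInt_gen_correct R_CompleteNormedModule).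
  apply Proper_StrongProper, at_right_proper_filter.
  apply Proper_StrongProper, Rbar_locally_filter. apply w_ex; auto. Qed.

Lemma gen_lower f l c d : 0 < c < d -> is_RInt_gen f F0 Finf l ->
  (forall t, 0 < t -> continuous f t) -> (forall t, 0 < t -> 0 <= f t) ->
  RInt f c d <= l.
Proof.
  intros Hcd Hl Hc Hp. apply Rnot_lt_le. intros Hlt.
  assert (He : 0 < RInt f c d - l) by lra.
  destruct (Hl (ball l (mkposreal _ He))) as [Q R HQ HR HQR].
  { exists (mkposreal _ He). auto. }
  assert (HQ' : F0 (fun a => Q a /\ 0 < a < c)) by (apply filter_and; auto; apply at_right0_ev; lra).
  assert (HR' : Finf (fun b => R b /\ d < b)) by (apply filter_and; auto; exists d; auto).
  destruct (filter_ex _ HQ') as [a [HQa Ha]].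
  destruct (filter_ex _ HR') as [b [HRb Hb]].
  destruct (HQR a b HQa HRb) as [If [HIf Hball]]. simpl in HIf.
  apply (@is_RInt_unique R_CompleteNormedModule) in HIf.
  apply ballR in Hball. simpl in Hball. subst If.
  assert (RInt f c d <= RInt f a b).
  { rewrite <- (RInt_Chasles f a c b) by (apply exR; auto; lra).
    rewrite <- (RInt_Chasles f c d b) by (apply exR; auto; lra).
    assert (0 <= RInt f a c) by (apply RInt_ge_0; [lra | apply exR; auto; lra | intros; apply Hp; lra]).
    assert (0 <= RInt f d b) by (apply RInt_ge_0; [lra | apply exR; auto; lra | intros; apply Hp; lra]).
    unfold plus; simpl. lra. }
  change (Rabs (RInt f a b - l) < RInt f c d - l) in Hball. apply Rabs_lt_between in Hball. lra.
Qed.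

Lemma gen_pos f l c d : 0 < c < d -> is_RInt_gen f F0 Finf l ->
  (forall t, 0 < t -> continuous f t) -> (forall t, 0 < t -> 0 <= f t) ->
  (forall t, c < t < d -> 0 < f t) -> 0 < l.
Proof.
  intros Hcd Hl Hc Hp Hs.
  apply Rlt_le_trans with (RInt f c d).
  apply RInt_gt_0; try lra. auto. intros; apply Hc; lra.
  eapply gen_lower; eauto.
Qed.

Lemma J_pos m s : -1 < m -> 0 < J m s.
Proof.
  intros Hm. apply (gen_pos (w m s) _ 1 2); try lra. apply J_correct; auto.
  apply w_cont. intros; apply Rlt_le, w_pos. intros; apply w_pos.
Qed.

Lemma pw_S m t : 0 < t -> pw (m + 1) t = pw m t * t.
Proof. intros H. unfold pw. replace ((m+1) * ln t) with (m * ln t + ln t) by ring.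
  rewrite exp_plus, exp_ln; auto. Qed.

Lemma w_S m s t : 0 < t -> w (m + 1) s t = t * w m s t.
Proof. intros H. unfold w. rewrite pw_S; auto. ring. Qed.

Lemma w_shift m s h t : w m (s + h) t = w m s t * exp (h * t).
Proof. unfold w. rewrite Rmult_assoc, <- exp_plus. f_equal. f_equal. ring. Qed.

Lemma w_bound m s h t : 0 < t -> h <> 0 -> Rabs h <= 1 ->
  Rabs ((w m (s + h) t - w m s t) / h - w (m + 1) s t) <= Rabs h * w (m + 2) (s + 1) t.
Proof.
  intros Ht Hh Hh1.
  replace (m + 2) with (m + 1 + 1) by ring.
  rewrite w_S, w_S, w_shift, w_shift by lra.
  replace ((w m s t * exp (h * t) - w m s t) / h - t * w m s t)
    with (w m s t * ((exp (h * t) - 1 - h * t) / h)) by (field; auto).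
  pose proof (w_pos m s t) as Hw.
  rewrite Rabs_mult, (Rabs_right (w m s t)) by lra.
  unfold Rdiv. rewrite Rabs_mult, Rabs_inv.
  pose proof (exp_taylor2 (h * t)) as HT.
  assert (Hah : 0 < Rabs h) by (apply Rabs_pos_lt; auto).
  assert (Rabs (exp (h * t) - 1 - h * t) * / Rabs h <= Rabs h * t ^ 2 * exp t).
  { apply Rmult_le_reg_r with (Rabs h); auto.
    rewrite Rmult_assoc, Rinv_l, Rmult_1_r by lra.
    apply Rle_trans with ((h * t) ^ 2 * exp (Rabs (h * t))); auto.
    replace ((h * t) ^ 2) with (Rabs h * t ^ 2 * Rabs h).
    2:{ rewrite <- (Rabs_right (t^2)) by (apply Rle_ge, pow2_ge_0). rewrite <- !Rabs_mult.
        rewrite Rabs_right. ring. apply Rle_ge. replace (h * t ^ 2 * h) with ((h*t)^2) by ring. apply pow2_ge_0. }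
    assert (exp (Rabs (h * t)) <= exp t).
    { apply exp_mono. rewrite Rabs_mult, (Rabs_right t) by lra. nra. }
    assert (0 <= Rabs h * t ^ 2 * Rabs h).
    { pose proof (pow2_ge_0 t). apply Rmult_le_pos; [apply Rmult_le_pos|]; lra. }
    apply Rle_trans with (Rabs h * t ^ 2 * Rabs h * exp t).
    apply Rmult_le_compat_l; auto. right; ring. }
  apply Rle_trans with (w m s t * (Rabs h * t ^ 2 * exp t)).
  apply Rmult_le_compat_l; lra.
  right. rewrite w_S by lra. rewrite Rmult_1_l. ring.
Qed.

Lemma J_deriv m s : -1 < m -> is_derive (J m) s (J (m + 1) s).
Proof.
  intros Hm. apply is_derive_Reals. intros eps Heps.
  assert (HC := J_pos (m + 2) (s + 1) ltac:(lra)).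
  set (C := J (m + 2) (s + 1)) in *.
  assert (Hd : 0 < Rmin 1 (eps / (C + 1))).
  { apply Rmin_case. lra. apply Rdiv_lt_0_compat; lra. }
  exists (mkposreal _ Hd). intros h Hh0 Hh. simpl in Hh.
  assert (Hh1 : Rabs h <= 1) by (pose proof (Rmin_l 1 (eps / (C + 1))); lra).
  assert (Hh2 : Rabs h < eps / (C + 1)) by (pose proof (Rmin_r 1 (eps / (C + 1))); lra).
  pose proof (is_RInt_gen_minus (w m (s+h)) (w m s) _ _ (J_correct m (s+h) Hm) (J_correct m s Hm)) as H1.
  pose proof (is_RInt_gen_scal _ (/h) _ H1) as H2.
  pose proof (is_RInt_gen_minus _ _ _ _ H2 (J_correct (m+1) s ltac:(lra))) as H3.
  assert (Hm2 : -1 < m + 2) by lra.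
  pose proof (is_RInt_gen_scal _ (Rabs h) _ (J_correct (m+2) (s+1) Hm2)) as H4.
  assert (H5' : filter_prod F0 Finf (fun ab : R * R => fst ab <= snd ab)).
  { apply (Filter_prod F0 Finf _ (fun a => 0 < a < 1) (fun b => 1 < b) (at_right0_ev 1 Rlt_0_1) (ex_intro _ 1 (fun x H => H))).
    intros; simpl; lra. }
  match type of H3 with is_RInt_gen ?f _ _ ?l => set (fF := f) in H3; set (lF := l) in H3 end.
  match type of H4 with is_RInt_gen ?f _ _ ?l => set (gF := f) in H4; set (lG := l) in H4 end.
  pose proof (@RInt_gen_norm R_CompleteNormedModule F0 Finf (at_right_proper_filter 0) (Rbar_locally_filter p_infty) fF gF lF lG H5') as H5.
  assert (H6 : filter_prod F0 Finf (fun ab => forall x, fst ab <= x <= snd ab -> norm (fF x) <= gF x)).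
  { apply (Filter_prod F0 Finf _ (fun a => 0 < a < 1) (fun b => 1 < b) (at_right0_ev 1 Rlt_0_1) (ex_intro _ 1 (fun x H => H))).
    intros a b Ha Hb x Hx. simpl in Hx.
    unfold fF, gF. unfold norm, minus, scal, plus, opp; simpl.
    unfold mult; simpl.
    assert (Hx0 : 0 < x) by lra. pose proof (w_bound m s h x Hx0 Hh0 Hh1).
    replace ((/ h) * (w m (s + h) x + - w m s x) + - w (m + 1) s x) with ((w m (s + h) x - w m s x) / h - w (m + 1) s x) by (field; auto).
    match goal with |- ?g => idtac g end. auto. }
  specialize (H5 H6 H3 H4).
  unfold lF, lG in H5. unfold norm, minus, scal, plus, opp in H5; simpl in H5. unfold mult in H5; simpl in H5.
  replace ((J m (s + h) - J m s) / h - J (m + 1) s) with ((/ h) * (J m (s + h) + - J m s) + - J (m + 1) s) by (field; auto).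
  apply Rle_lt_trans with (1 := H5).
  apply Rle_lt_trans with (Rabs h * (C + 1)). pose proof (Rabs_pos h). fold C. nra.
  apply Rmult_lt_reg_r with (/ (C + 1)). apply Rinv_0_lt_compat; lra.
  rewrite Rmult_assoc, Rinv_r by lra. rewrite Rmult_1_r. exact Hh2.
Qed.

Lemma J_CS m s : -1 < m -> J (m + 1) s ^ 2 < J m s * J (m + 1 + 1) s.
Proof.
  intros Hm.
  assert (HA := J_pos m s Hm).
  set (A := J m s) in *. set (B := J (m + 1) s). set (C := J (m + 1 + 1) s).
  set (lam := B / A).
  assert (Hm1 : -1 < m + 1) by lra. assert (Hm2 : -1 < m + 1 + 1) by lra.
  pose proof (is_RInt_gen_scal _ (lam ^ 2) _ (J_correct m s Hm)) as H0.
  pose proof (is_RInt_gen_scal _ (2 * lam) _ (J_correct (m + 1) s Hm1)) as H1.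
  pose proof (is_RInt_gen_plus _ _ _ _ (J_correct (m + 1 + 1) s Hm2) H0) as H2.
  pose proof (is_RInt_gen_minus _ _ _ _ H2 H1) as H3.
  assert (Hq : forall t, 0 < t -> (fun y => minus ((fun y0 => plus (w (m + 1 + 1) s y0) ((fun y1 => scal (lam ^ 2) (w m s y1)) y0)) y)
        ((fun y0 => scal (2 * lam) (w (m + 1) s y0)) y)) t = w m s t * (t - lam) ^ 2).
  { intros t Ht. simpl. unfold minus, plus, scal, opp; simpl. unfold mult; simpl.
    rewrite !w_S by auto. ring. }
  assert (Hpos := gen_pos _ _ (Rabs lam + 1) (Rabs lam + 2) ltac:(pose proof (Rabs_pos lam); lra) H3).
  assert (Hv : 0 < minus (plus C (scal (lam ^ 2) A)) (scal (2 * lam) B)).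
  { apply Hpos.
    - intros t Ht. apply cont_of_der. simpl. unfold minus, plus, scal, opp; simpl. unfold mult; simpl.
      unfold w, pw. auto_derive. repeat split; lra.
    - intros t Ht. rewrite Hq by auto. pose proof (w_pos m s t). pose proof (pow2_ge_0 (t - lam)). nra.
    - intros t Ht. rewrite Hq by (pose proof (Rabs_pos lam); lra). pose proof (w_pos m s t).
      assert (lam < t) by (pose proof (Rle_abs lam); lra).
      apply Rmult_lt_0_compat; auto. apply pow_lt. lra. }
  unfold minus, plus, scal, opp in Hv; simpl in Hv. unfold mult in Hv; simpl in Hv.
  unfold lam in Hv.
  assert (E : C + B / A * (B / A * 1) * A + - (2 * (B / A) * B) = (A * C - B ^ 2) / A) by (field; lra).
  rewrite E in Hv.
  assert (0 < A * C - B ^ 2).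
  { apply Rmult_lt_reg_r with (/ A). apply Rinv_0_lt_compat; lra. rewrite Rmult_0_l. exact Hv. }
  lra.
Qed.

Lemma Gamma_pos nu : 0 < nu -> 0 < Gamma_fn nu.
Proof.
  intros Hnu. change (0 < RInt_gen (gi (nu - 1)) F0 Finf).
  apply (gen_pos (gi (nu - 1)) _ 1 2); try lra.
  apply (@RInt_gen_correct R_CompleteNormedModule).
  apply Proper_StrongProper, at_right_proper_filter.
  apply Proper_StrongProper, Rbar_locally_filter. apply gi_ex; lra.
  apply gi_cont. intros; apply Rlt_le, gi_pos. intros; apply gi_pos.
Qed.

From Stdlib Require Import FunctionalExtensionality.

Lemma psi_eq b rho a sigma x : 0 < b -> 0 < sigma ->
  psi b rho a sigma x = / Gamma_fn (- (- rho / b)) *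
    J (- (- rho / b) - 1) ((b * x - a) / (sigma * b) * sqrt (2 * b)).
Proof.
  intros Hb Hs. unfold psi, D_par, J.
  set (s0 := (b * x - a) / (sigma * b) * sqrt (2 * b)).
  replace (- ((b * x - a) / (sigma * b)) * sqrt (2 * b)) with (- s0) by (unfold s0; ring).
  replace (fun t => Rpower t (- (- rho / b) - 1) * exp (- t ^ 2 / 2 - - s0 * t))
    with (w (- (- rho / b) - 1) s0).
  2:{ apply functional_extensionality. intros t. unfold w, pw, Rpower. replace (- t ^ 2 / 2 - - s0 * t) with (- t ^ 2 / 2 + s0 * t) by ring. reflexivity. }
  assert (E : exp ((b * x - a) ^ 2 / (2 * sigma ^ 2 * b)) * exp (- (- s0) ^ 2 / 4) = 1).
  { rewrite <- exp_plus, <- exp_0. f_equal. unfold s0.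
    replace ((- ((b * x - a) / (sigma * b) * sqrt (2 * b))) ^ 2) with
      (((b * x - a) / (sigma * b)) ^ 2 * (sqrt (2 * b) * sqrt (2 * b))) by ring.
    rewrite sqrt_sqrt by lra. field. split; lra. }
  set (X := exp ((b * x - a) ^ 2 / (2 * sigma ^ 2 * b))) in *.
  set (Y := exp (- (- s0) ^ 2 / 4)) in *.
  set (I := RInt_gen (w (- (- rho / b) - 1) s0) F0 Finf).
  set (Gm := Gamma_fn (- (- rho / b))).
  transitivity ((X * Y) * (/ Gm * I)). unfold Rdiv; ring. rewrite E; ring.
Qed.

Lemma Dn_psi b rho a sigma j : 0 < b -> 0 < sigma -> 0 < rho ->
  forall x, Derive_n (fun y => psi b rho a sigma y) j x = / Gamma_fn (- (- rho / b)) *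
    (b / (sigma * b) * sqrt (2 * b)) ^ j *
    J (- (- rho / b) - 1 + INR j) ((b * x - a) / (sigma * b) * sqrt (2 * b)).
Proof.
  intros Hb Hs Hr. induction j as [|j IH]; intros x.
  - simpl. rewrite psi_eq by auto. f_equal. ring. f_equal. ring.
  - simpl Derive_n. rewrite (Derive_ext _ _ x IH).
    apply is_derive_unique.
    assert (Hm : -1 < - (- rho / b) - 1 + INR j).
    { pose proof (pos_INR j). assert (0 < rho / b) by (apply Rdiv_lt_0_compat; auto).
      replace (- (- rho / b)) with (rho / b) by (field; lra). lra. }
    set (G := / Gamma_fn (- (- rho / b))). set (K := b / (sigma * b) * sqrt (2 * b)).
    set (m := - (- rho / b) - 1 + INR j).
    replace (- (- rho / b) - 1 + INR (S j)) with (m + 1) by (unfold m; rewrite S_INR; ring).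
    assert (Hd : is_derive (fun y => J m ((b * y - a) / (sigma * b) * sqrt (2 * b))) x
      (scal (b / (sigma * b) * sqrt (2 * b)) (J (m + 1) ((b * x - a) / (sigma * b) * sqrt (2 * b))))).
    { apply (is_derive_comp (J m) (fun y => (b * y - a) / (sigma * b) * sqrt (2 * b))).
      apply J_deriv; auto.
      auto_derive. auto. field. lra. }
    pose proof (is_derive_scal _ x (G * K ^ j) _ Hd) as Hd2.
    replace (G * K ^ S j * J (m + 1) ((b * x - a) / (sigma * b) * sqrt (2 * b)))
      with (G * K ^ j * scal K (J (m + 1) ((b * x - a) / (sigma * b) * sqrt (2 * b)))).
    exact Hd2.
    unfold scal; simpl; unfold mult; simpl. ring.
Qed.

Lemma da_J c M b sigma x a : -1 < M -> sigma * b <> 0 ->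
  is_derive (fun a' => c * J M ((b * x - a') / (sigma * b) * sqrt (2 * b))) a
    (c * (- (sqrt (2 * b) / (sigma * b))) * J (M + 1) ((b * x - a) / (sigma * b) * sqrt (2 * b))).
Proof.
  intros HM Hsb.
  assert (Hd : is_derive (fun y => J M ((b * x - y) / (sigma * b) * sqrt (2 * b))) a
      (scal (- (sqrt (2 * b) / (sigma * b))) (J (M + 1) ((b * x - a) / (sigma * b) * sqrt (2 * b))))).
  { apply (is_derive_comp (J M) (fun y => (b * x - y) / (sigma * b) * sqrt (2 * b))).
    apply J_deriv; auto.
    auto_derive. auto. field. split; intros ->; apply Hsb; ring. }
  pose proof (is_derive_scal _ a c _ Hd) as Hd2.
  replace (c * - (sqrt (2 * b) / (sigma * b)) * J (M + 1) ((b * x - a) / (sigma * b) * sqrt (2 * b)))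
    with (c * scal (- (sqrt (2 * b) / (sigma * b))) (J (M + 1) ((b * x - a) / (sigma * b) * sqrt (2 * b)))).
  exact Hd2.
  unfold scal; simpl; unfold mult; simpl. ring.
Qed.

Theorem lemma5p3 (b rho a sigma : R) (k : nat) (x : R) :
  0 < b -> 0 < rho -> 0 < sigma ->
  let dk := fun (a' : R) (j : nat) => Derive_n (fun y => psi b rho a' sigma y) j x in
  is_derive (fun a' => dk a' k / dk a' (S k)) a
    ((dk a k * dk a (S (S k)) - (dk a (S k)) ^ 2) / (b * (dk a (S k)) ^ 2))
  /\ 0 < (dk a k * dk a (S (S k)) - (dk a (S k)) ^ 2) / (b * (dk a (S k)) ^ 2).
Proof.
  intros Hb Hr Hs dk.
  set (G := / Gamma_fn (- (- rho / b))).
  set (K := b / (sigma * b) * sqrt (2 * b)).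
  set (M := - (- rho / b) - 1 + INR k).
  set (sA := fun a' => (b * x - a') / (sigma * b) * sqrt (2 * b)).
  assert (Hdk0 : forall a', dk a' k = G * K ^ k * J M (sA a')).
  { intros a'. unfold dk. rewrite Dn_psi by auto. reflexivity. }
  assert (Hdk1 : forall a', dk a' (S k) = G * K ^ S k * J (M + 1) (sA a')).
  { intros a'. unfold dk. rewrite Dn_psi by auto. unfold M, sA, G, K. rewrite S_INR.
    f_equal. f_equal. ring. }
  assert (Hdk2 : forall a', dk a' (S (S k)) = G * K ^ S (S k) * J (M + 1 + 1) (sA a')).
  { intros a'. unfold dk. rewrite Dn_psi by auto. unfold M, sA, G, K. rewrite !S_INR.
    f_equal. f_equal. ring. }
  assert (HM : -1 < M).
  { unfold M. pose proof (pos_INR k). assert (0 < rho / b) by (apply Rdiv_lt_0_compat; auto).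
    replace (- (- rho / b)) with (rho / b) by (field; lra). lra. }
  assert (HG : 0 < G).
  { unfold G. apply Rinv_0_lt_compat. apply Gamma_pos.
    replace (- (- rho / b)) with (rho / b) by (field; lra). apply Rdiv_lt_0_compat; auto. }
  assert (Hsq : 0 < sqrt (2 * b)) by (apply sqrt_lt_R0; lra).
  assert (HK : 0 < K).
  { unfold K. apply Rmult_lt_0_compat; auto. apply Rdiv_lt_0_compat; auto. apply Rmult_lt_0_compat; auto. }
  assert (Hsb : sigma * b <> 0) by (apply Rgt_not_eq, Rmult_lt_0_compat; auto).
  assert (HJ0 := J_pos M (sA a) HM).
  assert (HJ1 := J_pos (M + 1) (sA a) ltac:(lra)).
  assert (HJ2 := J_pos (M + 1 + 1) (sA a) ltac:(lra)).
  assert (HCS := J_CS M (sA a) HM).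
  rewrite Hdk0, Hdk1, Hdk2.
  set (J0 := J M (sA a)) in *. set (J1 := J (M + 1) (sA a)) in *. set (J2 := J (M + 1 + 1) (sA a)) in *.
  assert (Hv : (G * K ^ k * J0 * (G * K ^ S (S k) * J2) - (G * K ^ S k * J1) ^ 2) /
      (b * (G * K ^ S k * J1) ^ 2) = (J0 * J2 - J1 ^ 2) / (b * J1 ^ 2)).
  { simpl. field. repeat split; try lra. apply pow_nonzero; lra. }
  rewrite Hv. split.
  - apply is_derive_ext with (f := fun a' => (G * K ^ k * J M (sA a')) / (G * K ^ S k * J (M + 1) (sA a'))).
    { intros t. rewrite Hdk0, Hdk1. reflexivity. }
    assert (D0 := da_J (G * K ^ k) M b sigma x a HM Hsb).
    assert (D1 := da_J (G * K ^ S k) (M + 1) b sigma x a ltac:(lra) Hsb).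
    pose proof (is_derive_div _ _ a _ _ D0 D1) as D.
    simpl in D. fold (sA a) in D. fold J0 J1 J2 in D.
    match type of D with ?P -> _ => assert (Hne : P) end.
    { apply Rgt_not_eq. unfold Rgt. pose proof (pow_lt K k HK). apply Rmult_lt_0_compat; [apply Rmult_lt_0_compat; [auto | apply Rmult_lt_0_compat; auto] | auto]. }
    specialize (D Hne).
    match type of D with is_derive _ _ ?v => replace ((J0 * J2 - J1 ^ 2) / (b * J1 ^ 2)) with v end.
    exact D.
    unfold K. simpl. field. fold K. pose proof (pow_lt K k HK). repeat split; lra.
  - apply Rdiv_lt_0_compat. lra. apply Rmult_lt_0_compat; auto. apply pow_lt; auto.
Qed.
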